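(* Let $A$ be a simplicial space, $x\in A_n$ a non-degenerate simplex, $N\ge n$, and $(U_\sigma)_{\sigma:[N]\twoheadrightarrow[n]}$ an $x$-admissible family, extended to all epimorphisms $\sigma:[k]\twoheadrightarrow[n]$ with $k\le N$ by $U_\sigma:=\bigcap_{\tau:[N]\twoheadrightarrow[k]}(\tau^* )^{-1}(U_{\sigma\circ\tau})$. For an epimorphism $\sigma:[k]\twoheadrightarrow[n]$ (any $k\in\mathbb{N}$) let $I_\sigma$ be the set of monomorphisms $\delta:[k']\hookrightarrow[k]$ in $\Delta$ with $k'\le N$ and $\sigma\circ\delta$ an epimorphism, and set $U(\sigma):=\bigcap_{\delta\in I_\sigma}(\delta^* )^{-1}(U_{\sigma\circ\delta})\subset A_k$. Then, for every epimorphism $\sigma:[k]\twoheadrightarrow[n]$: (a) $U(\sigma)$ is an open neighborhood of $\sigma^*(x)$ in $A_k$; (b) $U(\sigma)\subset U_\sigma$ whenever $k\le N$; (c) for every monomorphism $\delta:[i]\hookrightarrow[k]$ such that $\sigma\circ\delta$ is onto, $\delta^*(U(\sigma))\subset U(\sigma\circ\delta)$; (d) for every epimorphism $\tau:[k']\twoheadrightarrow[k]$, $\tau^*(U(\sigma))\subset U(\sigma\circ\tau)$; (e) for every epimorphism $\tau:[k]\twoheadrightarrow[k']$, $\tau^*(A_{k'})\cap U(\sigma)\ne\emptyset$ if and only if there exists an epimorphism $\rho:[k']\twoheadrightarrow[n]$ with $\sigma=\rho\circ\tau$.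
   Context: $\Delta$ is the simplicial category with objects $[n]=\{0,\dots,n\}$ and non-decreasing maps as morphisms. A simplicial space is a contravariant functor $A:\Delta\to\mathrm{Top}$, with $A_n:=A([n])$ and $\delta^*:=A(\delta)$. A point of $A_n$ is degenerate if it lies in the image of a degeneracy map $A(\sigma_i^n)$, where $\sigma_i^n:[n]\to[n-1]$ sends $j\le i$ to $j$ and $j>i$ to $j-1$. For $N\ge n$ and non-degenerate $x\in A_n$, a family $(U_\sigma)_{\sigma:[N]\twoheadrightarrow[n]}$ indexed by the epimorphisms $[N]\twoheadrightarrow[n]$ is called $x$-admissible when (i) each $U_\sigma$ is an open neighborhood of $\sigma^*(x)$ in $A_N$, and (ii) for every epimorphism $\sigma:[N]\twoheadrightarrow[n]$ and every epimorphism $\tau:[N]\twoheadrightarrow[m]$, $U_\sigma\cap\tau^*(A_m)\ne\emptyset$ holds if and only if there exists an epimorphism $\rho:[m]\twoheadrightarrow[n]$ with $\sigma=\rho\circ\tau$. *)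

(* Defs.v *)
From HB Require Import structures.
From mathcomp Require Import all_boot all_order.
From mathcomp Require Import boolp classical_sets topology.
From mathcomp Require Import zify.

Set Implicit Arguments.
Unset Strict Implicit.
Unset Printing Implicit Defensive.

Local Open Scope classical_set_scope.

(* A morphism [m] -> [n] of Delta, with [m] = {0,..,m} = 'I_m.+1,
   is a non-decreasing map 'I_m.+1 -> 'I_n.+1. *)
Definition nondecr (m n : nat) (f : {ffun 'I_m.+1 -> 'I_n.+1}) : bool :=
  [forall i : 'I_m.+1, forall j : 'I_m.+1, (i <= j)%N ==> (f i <= f j)%N].

Definition Dhom (m n : nat) := {f : {ffun 'I_m.+1 -> 'I_n.+1} | nondecr f}.

Definition dfun m n (f : Dhom m n) : 'I_m.+1 -> 'I_n.+1 := fun i => proj1_sig f i.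

Lemma nondecr_comp m n p (g : Dhom n p) (f : Dhom m n) :
  nondecr [ffun i => dfun g (dfun f i)].
Proof.
case: g => g Hg; case: f => f Hf.
apply/forallP => i; apply/forallP => j; apply/implyP => ij.
rewrite /dfun /= !ffunE.
have fij : (f i <= f j)%N by move: Hf => /forallP /(_ i) /forallP /(_ j) /implyP; apply.
by move: Hg => /forallP /(_ (f i)) /forallP /(_ (f j)) /implyP; apply.
Qed.

Definition dcomp m n p (g : Dhom n p) (f : Dhom m n) : Dhom m p :=
  exist _ [ffun i => dfun g (dfun f i)] (nondecr_comp g f).

Lemma nondecr_id n : nondecr [ffun i : 'I_n.+1 => i].
Proof.
by apply/forallP => i; apply/forallP => j; apply/implyP => ij; rewrite !ffunE.
Qed.

Definition did n : Dhom n n := exist _ [ffun i => i] (nondecr_id n).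

Definition epi m n (f : Dhom m n) : bool := [forall j, exists i, dfun f i == j].
Definition mono m n (f : Dhom m n) : bool := injectiveb (dfun f).

(* codegeneracy sigma_i^n : [n] -> [n-1], here n = k.+1, i in {0,..,k}:
   j <= i |-> j, j > i |-> j - 1 *)
Definition degen_fun k (i : 'I_k.+1) : {ffun 'I_k.+2 -> 'I_k.+1} :=
  [ffun j : 'I_k.+2 => inord (if (j <= i)%N then (j : nat) else j.-1)].

Lemma nondecr_degen k (i : 'I_k.+1) : nondecr (degen_fun i).
Proof.
apply/forallP => a; apply/forallP => b; apply/implyP => ab.
rewrite !ffunE.
have ha : ((if (a <= i)%N then (a : nat) else a.-1) < k.+1)%N.
  case: ifP => H; first exact: leq_ltn_trans H (ltn_ord i).
  by have := ltn_ord a; case: (nat_of_ord a) => //.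
have hb : ((if (b <= i)%N then (b : nat) else b.-1) < k.+1)%N.
  case: ifP => H; first exact: leq_ltn_trans H (ltn_ord i).
  by have := ltn_ord b; case: (nat_of_ord b) => //.
rewrite !inordK //.
move: ab ha hb; case: ifP; case: ifP => /=; lia.
Qed.

Definition degen k (i : 'I_k.+1) : Dhom k.+1 k := exist _ (degen_fun i) (nondecr_degen i).

Record sspace := SSpace {
  sp : nat -> topologicalType;
  (* act f = f^* = A(f) : A_n -> A_m  for f : [m] -> [n] *)
  act : forall m n, Dhom m n -> sp n -> sp m;
  act_cont : forall m n (f : Dhom m n), continuous (act f);
  act_id : forall n (x : sp n), act (did n) x = x;
  act_comp : forall m n p (g : Dhom n p) (f : Dhom m n) (x : sp p),
      act (dcomp g f) x = act f (act g x)
}.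

Arguments sp : clear implicits.
Arguments act A {m n} f _ : rename.

Definition degenerate (A : sspace) (n : nat) : sp A n -> Prop :=
  match n with
  | 0 => fun _ => False
  | k.+1 => fun x => exists (i : 'I_k.+1) (y : sp A k), x = act A (degen i) y
  end.

Definition admissible (A : sspace) (n : nat) (x : sp A n) (N : nat)
    (U : Dhom N n -> set (sp A N)) : Prop :=
  (forall sigma : Dhom N n, epi sigma ->
      open (U sigma) /\ U sigma (act A sigma x)) /\
  (forall (sigma : Dhom N n), epi sigma ->
   forall m (tau : Dhom N m), epi tau ->
      (U sigma `&` range (act A tau) !=set0 <->
       exists rho : Dhom m n, epi rho /\ sigma = dcomp rho tau)).

Definition Uext (A : sspace) (n N : nat) (U : Dhom N n -> set (sp A N))
    (k : nat) (sigma : Dhom k n) : set (sp A k) :=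
  [set y | forall tau : Dhom N k, epi tau -> U (dcomp sigma tau) (act A tau y)].

Definition Ubig (A : sspace) (n N : nat) (U : Dhom N n -> set (sp A N))
    (k : nat) (sigma : Dhom k n) : set (sp A k) :=
  [set y | forall k' (delta : Dhom k' k), (k' <= N)%N -> mono delta ->
      epi (dcomp sigma delta) -> Uext U (dcomp sigma delta) (act A delta y)].

(* Main.v *)
Require Import Defs.
From HB Require Import structures.
From mathcomp Require Import all_boot all_order.
From mathcomp Require Import boolp classical_sets topology.
From mathcomp Require Import zify.
Local Open Scope classical_set_scope.
Set Warnings "-notation-overridden".
Set Warnings "-notation-overridden".
Set Implicit Arguments.
Unset Strict Implicit.

Lemma dfun_comp m n p (g : Dhom n p) (f : Dhom m n) i :
  dfun (dcomp g f) i = dfun g (dfun f i).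
Proof. by rewrite /dfun /= ffunE. Qed.

Lemma dfun_id n i : dfun (did n) i = i.
Proof. by rewrite /dfun /= ffunE. Qed.

Lemma dhom_eq m n (f g : Dhom m n) : (forall i, dfun f i = dfun g i) -> f = g.
Proof. by move=> H; apply: val_inj; apply/ffunP => i; apply: H. Qed.

Lemma dcompA m n p q (h : Dhom p q) (g : Dhom n p) (f : Dhom m n) :
  dcomp h (dcomp g f) = dcomp (dcomp h g) f.
Proof. by apply: dhom_eq => i; rewrite !dfun_comp. Qed.

Lemma dcomp1 m n (f : Dhom m n) : dcomp f (did m) = f.
Proof. by apply: dhom_eq => i; rewrite dfun_comp dfun_id. Qed.

Lemma dcomp1l m n (f : Dhom m n) : dcomp (did n) f = f.
Proof. by apply: dhom_eq => i; rewrite dfun_comp dfun_id. Qed.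

Lemma dfun_mono m n (f : Dhom m n) (i j : 'I_m.+1) : (i <= j)%N -> (dfun f i <= dfun f j)%N.
Proof.
case: f => f Hf ij; rewrite /dfun /=.
by move: Hf => /forallP /(_ i) /forallP /(_ j) /implyP; apply.
Qed.

Lemma epiP m n (f : Dhom m n) : epi f -> forall j, exists i, dfun f i = j.
Proof. by move=> /forallP H j; case/existsP: (H j) => i /eqP; exists i. Qed.

Lemma epiI m n (f : Dhom m n) : (forall j, exists i, dfun f i = j) -> epi f.
Proof. by move=> H; apply/forallP => j; case: (H j) => i e; apply/existsP; exists i; rewrite e. Qed.

Lemma epi_comp m n p (g : Dhom n p) (f : Dhom m n) : epi g -> epi f -> epi (dcomp g f).
Proof.
move=> /epiP Hg /epiP Hf; apply: epiI => j.
case: (Hg j) => i <-; case: (Hf i) => i' <-; exists i'; by rewrite dfun_comp.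
Qed.

Lemma epi_compl m n p (g : Dhom n p) (f : Dhom m n) : epi (dcomp g f) -> epi g.
Proof.
move=> /epiP H; apply: epiI => j; case: (H j) => i <-; exists (dfun f i); by rewrite dfun_comp.
Qed.

Lemma monoP m n (f : Dhom m n) : mono f -> injective (dfun f).
Proof. by move/injectiveP. Qed.

Lemma mono_comp m n p (g : Dhom n p) (f : Dhom m n) : mono g -> mono f -> mono (dcomp g f).
Proof.
move=> /monoP Hg /monoP Hf; apply/injectiveP => i j; rewrite !dfun_comp => e.
exact/Hf/Hg.
Qed.

Lemma mono_id n : mono (did n).
Proof. by apply/injectiveP => i j; rewrite !dfun_id. Qed.

Lemma epi_id n : epi (did n).
Proof. by apply: epiI => j; exists j; rewrite dfun_id. Qed.

Section Mk.
Variables (m n : nat) (h : 'I_m.+1 -> 'I_n.+1).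
Hypothesis Hh : forall i j : 'I_m.+1, (i <= j)%N -> (h i <= h j)%N.
Lemma mkD_nd : nondecr [ffun i => h i].
Proof. by apply/forallP => i; apply/forallP => j; apply/implyP => ij; rewrite !ffunE; apply: Hh. Qed.
Definition mkD : Dhom m n := exist _ [ffun i => h i] mkD_nd.
Lemma dfun_mkD i : dfun mkD i = h i.
Proof. by rewrite /dfun /= ffunE. Qed.
End Mk.

Lemma dfun_degen k (i : 'I_k.+1) (j : 'I_k.+2) :
  nat_of_ord (dfun (degen i) j) = if (j <= i)%N then (j : nat) else j.-1.
Proof.
rewrite /dfun /= ffunE inordK //.
case: ifP => H; first exact: leq_ltn_trans H (ltn_ord i).
by have := ltn_ord j; case: (nat_of_ord j).
Qed.

Lemma epi_degen k (i : 'I_k.+1) : epi (degen i).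
Proof.
apply: epiI => j.
case: (leqP j i) => ji.
  exists (widen_ord (leqnSn _) j); apply: ord_inj; by rewrite dfun_degen /= ji.
have jlt : (j.+1 < k.+2)%N by rewrite ltnS.
exists (Ordinal jlt); apply: ord_inj; rewrite dfun_degen /=.
by rewrite leqNgt (ltn_trans ji (ltnSn _)).
Qed.
Lemma open_forall_fin (X : topologicalType) (T : finType) (b : T -> bool) (P : T -> set X) :
  (forall t, b t -> open (P t)) -> open [set y | forall t, b t -> P t y].
Proof.
move=> HP.
have : forall s : seq T, open [set y | forall t, t \in s -> b t -> P t y].
  elim=> [|t s IH].
    have -> : [set y | forall t, t \in [::] -> b t -> P t y] = setT.
      by apply/seteqP; split => y //= _ t; rewrite in_nil.
    exact: openT.
  have -> : [set y | forall t0, t0 \in t :: s -> b t0 -> P t0 y] =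
     [set y | b t -> P t y] `&` [set y | forall t, t \in s -> b t -> P t y].
    apply/seteqP; split => y /=.
      by move=> H; split => [|u us]; apply: H; rewrite inE ?eqxx ?us ?orbT.
    by move=> [H1 H2] u; rewrite inE => /orP [/eqP ->|]; auto.
  apply: openI => //.
  case bt: (b t).
    have -> : [set y | true -> P t y] = P t by apply/seteqP; split => y /=; auto.
    exact: HP.
  have -> : [set y | false -> P t y] = setT by apply/seteqP; split => y //=.
  exact: openT.
move/(_ (enum T)).
have -> // : [set y | forall t, t \in enum T -> b t -> P t y] = [set y | forall t, b t -> P t y].
apply/seteqP; split => y /= H t; first by apply: H; rewrite mem_enum.
by move=> _; apply: H.
Qed.
Lemma factor_degen m k (g : Dhom m.+1 k) (i : 'I_m.+1) :
  (forall a b : 'I_m.+2, nat_of_ord a = i -> nat_of_ord b = i.+1 -> dfun g a = dfun g b) ->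
  exists g' : Dhom m k, g = dcomp g' (degen i).
Proof.
move=> Hg.
pose h (v : 'I_m.+1) : 'I_m.+2 := inord (if (v <= i)%N then (v : nat) else v.+1).
have hv v : nat_of_ord (h v) = if (v <= i)%N then (v : nat) else v.+1.
  rewrite /h inordK //; case: ifP => _; last by rewrite ltnS.
  exact: ltn_trans (ltn_ord v) (ltnSn _).
have Hh : forall a b : 'I_m.+1, (a <= b)%N -> (dfun g (h a) <= dfun g (h b))%N.
  move=> a b ab; apply: dfun_mono; rewrite !hv.
  by case: ifP; case: ifP => /=; lia.
exists (mkD Hh); apply: dhom_eq => j; rewrite dfun_comp dfun_mkD.
have dj := dfun_degen i j.
case: (leqP j i) => ji.
  congr (dfun g _); apply: ord_inj; rewrite hv dj; by case: ifP; case: ifP => /=; lia.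
case: (ltnP i.+1 j) => ij.
  congr (dfun g _); apply: ord_inj; rewrite hv dj; by case: ifP; case: ifP => /=; lia.
have jE : nat_of_ord j = i.+1 by lia.
rewrite -(Hg (h (dfun (degen i) j)) j) //; rewrite hv dj; by case: ifP; case: ifP => /=; lia.
Qed.

Lemma factor m k (g : Dhom m k) : exists j (e : Dhom m j) (d : Dhom j k),
  [/\ (j <= m)%N, epi e, mono d & g = dcomp d e].
Proof.
elim: m k g => [|m IH] k g.
  exists 0, (did 0), g; split => //; [exact: epi_id| |by rewrite dcomp1].
  by apply/injectiveP => a b _; apply: ord_inj; case: a b => [[]] // ? [[]].
case: (boolP [exists a, exists b, (a != b) && (dfun g a == dfun g b)]); last first.
  move=> /existsPn H; exists m.+1, (did _), g; split => //; [exact: epi_id| |by rewrite dcomp1].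
  apply/injectiveP => a b e; apply/eqP; move/existsPn: (H a) => /(_ b).
  by rewrite e eqxx andbT negbK.
move=> /existsP [a /existsP [b /andP [ab /eqP gab]]].
wlog lab : a b ab gab / (a < b)%N.
  move=> W; case: (ltngtP a b) => H; first exact: (W a b).
    by apply: (W b a) => //; rewrite eq_sym.
  by move: ab; rewrite (ord_inj H) eqxx.
have ai : (a < m.+1)%N by have := ltn_ord b; lia.
have [g' ->] : exists g' : Dhom m k, g = dcomp g' (degen (Ordinal ai)).
  apply: factor_degen => c d /= ca db.
  apply: ord_inj; apply/eqP; rewrite eqn_leq dfun_mono ?ca ?db //=.
  have -> : dfun g c = dfun g a by congr (dfun g _); apply: ord_inj.
  rewrite gab; apply: dfun_mono; rewrite db; exact: lab.
have [j [e [d [jm ee md ->]]]] := IH k g'.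
exists j, (dcomp e (degen (Ordinal ai))), d; split => //.
- by apply: leq_trans jm _.
- by apply: epi_comp => //; apply: epi_degen.
- by rewrite dcompA.
Qed.

Lemma exists_epi n N : (n <= N)%N -> exists t : Dhom N n,
  epi t /\ forall i : 'I_N.+1, (i <= n)%N -> nat_of_ord (dfun t i) = i.
Proof.
move=> nN.
pose h (i : 'I_N.+1) : 'I_n.+1 := inord (minn i n).
have hv i : nat_of_ord (h i) = minn i n by rewrite /h inordK // ltnS geq_minr.
have Hh : forall i j : 'I_N.+1, (i <= j)%N -> (h i <= h j)%N.
  by move=> i j ij; rewrite !hv; lia.
exists (mkD Hh); split.
  apply: epiI => j.
  have jN : (j < N.+1)%N by have := ltn_ord j; lia.
  exists (Ordinal jN); apply: ord_inj; rewrite dfun_mkD hv /=.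
  by have := ltn_ord j; lia.
by move=> i iN; rewrite dfun_mkD hv; lia.
Qed.

Section Main.
Variables (A : sspace) (n : nat) (x : sp A n) (N : nat) (U : Dhom N n -> set (sp A N)).
Hypothesis nN : (n <= N)%N.
Hypothesis adm : admissible x U.

Lemma Uext_epi j m (rho : Dhom j n) (e : Dhom m j) z :
  epi e -> Uext U rho z -> Uext U (dcomp rho e) (act A e z).
Proof.
move=> ee H t et; rewrite -act_comp -dcompA; apply: H; exact: epi_comp.
Qed.

Lemma Ubig_gen k (sigma : Dhom k n) y : Ubig U sigma y ->
  forall m (f : Dhom m k), (m <= N)%N -> epi (dcomp sigma f) ->
  Uext U (dcomp sigma f) (act A f y).
Proof.
move=> H m f mN ef.
have [j [e [d [jm ee md fE]]]] := factor f.
subst f; rewrite act_comp dcompA; apply: Uext_epi => //.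
apply: H => //; first exact: leq_trans jm mN.
by move: ef; rewrite dcompA; apply: epi_compl.
Qed.

Lemma Ubig_x k (sigma : Dhom k n) : epi sigma -> Ubig U sigma (act A sigma x).
Proof.
move=> es k' d _ _ ed t et; rewrite -!act_comp.
rewrite dcompA; apply: (proj2 (proj1 adm _ _)); exact: epi_comp.
Qed.

Lemma Ubig_open k (sigma : Dhom k n) : epi sigma -> open (Ubig U sigma).
Proof.
move=> es.
have -> : Ubig U sigma = [set y | forall t : 'I_N.+1, true -> 
   [set y | forall d : Dhom t k, (mono d && epi (dcomp sigma d)) ->
      (act A d @^-1` Uext U (dcomp sigma d)) y] y].
  apply/seteqP; split => y /= H.
    by move=> t _ d /andP [md ed]; apply: H => //; rewrite -ltnS.
  move=> k' d kN md ed.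
  have kN' : (k' < N.+1)%N by rewrite ltnS.
  exact: (H (Ordinal kN') isT d (introT andP (conj md ed))).
apply: open_forall_fin => t _; apply: open_forall_fin => d /andP [md ed].
apply: (@open_comp _ _ (act A d)); first by move=> z _; apply: act_cont.
rewrite /Uext.
have -> : [set y | forall tau : Dhom N t, epi tau -> U (dcomp (dcomp sigma d) tau) (act A tau y)]
   = [set y | forall tau : Dhom N t, epi tau -> (act A tau @^-1` U (dcomp (dcomp sigma d) tau)) y].
  by [].
apply: open_forall_fin => tau et.
apply: (@open_comp _ _ (act A tau)); first by move=> z _; apply: act_cont.
by apply: (proj1 (proj1 adm _ _)); apply: epi_comp.
Qed.

Lemma key k k' (sigma : Dhom k n) (tau : Dhom k k') z :
  epi sigma -> Ubig U sigma (act A tau z) ->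
  forall a b : 'I_k.+1, (a < b)%N -> dfun tau a = dfun tau b -> dfun sigma a = dfun sigma b.
Proof.
move=> es Hy a b ab tab.
case: n x U nN adm sigma es Hy => [|n0] x0 U0 nN0 adm0 sigma es Hy.
  by apply: ord_inj; case: (dfun sigma a) => [[]] //; case: (dfun sigma b) => [[]].
apply: contrapT => sab.
have slt : (dfun sigma a < dfun sigma b)%N.
  rewrite ltn_neqAle dfun_mono ?andbT; last exact: ltnW.
  by apply/eqP => e; apply: sab; apply: ord_inj.
pose s (v : 'I_n0.+2) : 'I_k.+1 := if v == dfun sigma a then a else if v == dfun sigma b then b
   else odflt a [pick i | dfun sigma i == v].
have ss v : dfun sigma (s v) = v.
  rewrite /s; case: eqP => [->//|_]; case: eqP => [->//|_].
  case: pickP => [i /eqP //|H].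
  by have [i ei] := epiP es v; move: (H i); rewrite ei eqxx.
have Hs : forall v w : 'I_n0.+2, (v <= w)%N -> (s v <= s w)%N.
  move=> v w vw; rewrite leqNgt; apply/negP => wv.
  have := dfun_mono sigma (ltnW wv); rewrite !ss => wv'.
  have vE : v = w by apply: ord_inj; apply/eqP; rewrite eqn_leq vw wv'.
  by move: wv; rewrite vE ltnn.
pose d := mkD Hs.
have sd : dcomp sigma d = did _ by apply: dhom_eq => v; rewrite dfun_comp dfun_mkD ss dfun_id.
have md : mono d.
  apply/injectiveP => v w; rewrite /d !dfun_mkD => e; by rewrite -(ss v) -(ss w) e.
have := Hy _ d nN0 md; rewrite sd => /(_ (epi_id _)) Hd.
have [t0 [et0 t0v]] := exists_epi nN0.
have := Hd t0 et0; rewrite dcomp1l => Ht0.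
have pn : (dfun sigma a < n0.+1)%N by have := ltn_ord (dfun sigma b); lia.
pose pp : 'I_n0.+1 := Ordinal pn.
have [g' gE] : exists g' : Dhom n0 k', dcomp tau d = dcomp g' (degen pp).
  apply: factor_degen => c e ce de.
  have sa : s (dfun sigma a) = a by rewrite /s eqxx.
  have sb : s (dfun sigma b) = b by rewrite /s ifN ?eqxx //; apply/eqP => E; move: slt; rewrite E ltnn.
  have c' : c = dfun sigma a by apply: ord_inj.
  apply: ord_inj; apply/eqP; rewrite eqn_leq dfun_mono ?ce ?de //=.
  rewrite c' !dfun_comp /d !dfun_mkD sa tab -sb.
  by apply: dfun_mono; apply: (Hs _ _); rewrite de; exact: slt.
have [] := (proj2 adm0) t0 et0 n0 (dcomp (degen pp) t0) (epi_comp (epi_degen _) et0).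
move=> H _.
have [rho [_ rE]] : exists rho : Dhom n0 n0.+1, epi rho /\ t0 = dcomp rho (dcomp (degen pp) t0).
  apply: H; exists (act A t0 (act A d (act A tau z))); split => //.
  exists (act A g' z) => //; rewrite act_comp; congr (act A t0 _); by rewrite -!act_comp gE.
have p1N : (dfun sigma a < N.+1)%N by have := ltn_ord (dfun sigma b); lia.
have p2N : ((dfun sigma a).+1 < N.+1)%N by have := ltn_ord (dfun sigma b); lia.
have e1 := congr1 (fun f => dfun f (Ordinal p1N)) rE.
have e2 := congr1 (fun f => dfun f (Ordinal p2N)) rE.
move: e1 e2; rewrite /= !dfun_comp.
have v1 := t0v (Ordinal p1N) (ltnW pn).
have v2 := t0v (Ordinal p2N) pn.
have -> : dfun (degen pp) (dfun t0 (Ordinal p1N)) = dfun (degen pp) (dfun t0 (Ordinal p2N)).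
  apply: ord_inj; rewrite !dfun_degen v1 v2 /= leqnn ltnn //.
move=> E1 E2; rewrite E1 in v1; rewrite E2 in v2; rewrite v1 in v2; move: v2 => /=; lia.
Qed.
End Main.

Theorem proposition2p3 (A : sspace) (n : nat) (x : sp A n) :
  ~ degenerate x ->
  forall (N : nat), (n <= N)%N ->
  forall (U : Dhom N n -> set (sp A N)), admissible x U ->
  forall (k : nat) (sigma : Dhom k n), epi sigma ->
  (* (a) *)
  (open (Ubig U sigma) /\ Ubig U sigma (act A sigma x)) /\
  (* (b) *)
  ((k <= N)%N -> Ubig U sigma `<=` Uext U sigma) /\
  (* (c) *)
  (forall (i : nat) (delta : Dhom i k), mono delta -> epi (dcomp sigma delta) ->
      act A delta @` Ubig U sigma `<=` Ubig U (dcomp sigma delta)) /\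
  (* (d) *)
  (forall (k' : nat) (tau : Dhom k' k), epi tau ->
      act A tau @` Ubig U sigma `<=` Ubig U (dcomp sigma tau)) /\
  (* (e) *)
  (forall (k' : nat) (tau : Dhom k k'), epi tau ->
      (range (act A tau) `&` Ubig U sigma !=set0 <->
       exists rho : Dhom k' n, epi rho /\ sigma = dcomp rho tau)).
Proof.
move=> _ N nN U adm k sigma es.
split; first by split; [exact: (Ubig_open adm es) | exact: (Ubig_x adm es)].
split.
  move=> kN y Hy.
  have := Ubig_gen (f:=did k) Hy kN; rewrite dcomp1 act_id; apply; exact: es.
split.
  move=> i d md ed _ [y Hy <-] k'' d' kN md' ed'.
  rewrite -act_comp -dcompA; apply: (Ubig_gen Hy kN); by rewrite dcompA.
split.
  move=> k' t et _ [y Hy <-] k'' d' kN md' ed'.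
  rewrite -act_comp -dcompA; apply: (Ubig_gen Hy kN); by rewrite dcompA.
move=> k' t et; split; last first.
  move=> [rho [er sE]]; exists (act A sigma x); split; last exact: Ubig_x.
  by exists (act A rho x) => //; rewrite sE act_comp.
move=> [w [[z _ zE] Hw]]; subst w.
have sab : forall a b, dfun t a = dfun t b -> dfun sigma a = dfun sigma b.
  move=> a b e; case: (ltngtP a b) => H.
  - exact: (key nN adm es Hw H e).
  - by apply/esym; apply: (key nN adm es Hw H (esym e)).
  - by rewrite (ord_inj H).
pose pre (b : 'I_k'.+1) : 'I_k.+1 := odflt ord0 [pick a | dfun t a == b].
have preE b : dfun t (pre b) = b.
  rewrite /pre; case: pickP => [a /eqP //|H].
  by have [a ea] := epiP et b; move: (H a); rewrite ea eqxx.
have Hr : forall b b' : 'I_k'.+1, (b <= b')%N -> (dfun sigma (pre b) <= dfun sigma (pre b'))%N.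
  move=> b b'; rewrite leq_eqVlt => /orP [/eqP bb|bb].
    by rewrite (ord_inj bb).
  apply: dfun_mono; rewrite leqNgt; apply/negP => H.
  have := dfun_mono t (ltnW H); rewrite !preE => H'.
  by move: (leq_ltn_trans H' bb); rewrite ltnn.
have rt a : dfun sigma (pre (dfun t a)) = dfun sigma a by apply: sab; rewrite preE.
exists (mkD Hr); split.
  apply: epiI => v; have [a <-] := epiP es v.
  by exists (dfun t a); rewrite dfun_mkD rt.
by apply: dhom_eq => a; rewrite dfun_comp dfun_mkD rt.
Qed.
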